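(* For any integer $n\ge3$, with $P_n$ and $C_n$ the path and cycle of order $n$, $\gamma_{(2,2,0)}(P_n)=\gamma_{(2,2,0)}(C_n)=2\lceil n/3\rceil$.
   Context: $N(v)$ is the open neighbourhood. $\gamma_{(2,2,0)}(G)$ is the minimum of $\sum_v f(v)$ over functions $f:V(G)\to\{0,1,2\}$ such that $\sum_{u\in N(v)}f(u)\ge2$ for every $v$ with $f(v)\in\{0,1\}$. *)

(* Defs.v *)
From mathcomp Require Import all_boot all_order.
Set Implicit Arguments. Unset Strict Implicit. Unset Printing Implicit Defensive.

Definition path_adj (n : nat) : rel 'I_n :=
  fun i j => (i.+1 == j :> nat) || (j.+1 == i :> nat).

Definition cycle_adj (n : nat) : rel 'I_n :=
  fun i j => ((i.+1 %% n) == j :> nat) || ((j.+1 %% n) == i :> nat).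

Definition nbr_sum (T : finType) (adj : rel T) (f : T -> nat) (v : T) : nat :=
  \sum_(u in T | adj v u) f u.

Definition is_220_df (T : finType) (adj : rel T) (f : {ffun T -> 'I_3}) : bool :=
  [forall v, (f v <= 1) ==> (2 <= nbr_sum adj (fun u => nat_of_ord (f u)) v)].

Definition weight (T : finType) (f : {ffun T -> 'I_3}) : nat :=
  \sum_(v : T) nat_of_ord (f v).

(* gamma_(2,2,0)(G): minimum weight of a (2,2,0)-dominating function.
   (The function constantly 2 is always one, so the minimum is over a
   nonempty set; the default value 0 is never used for that reason.) *)
Definition gamma220 (T : finType) (adj : rel T) : nat :=
  \big[minn/weight [ffun _ : T => (ord_max : 'I_3)]]_(f : {ffun T -> 'I_3} | is_220_df adj f)
    weight f.
Arguments path_adj n : clear implicits.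
Arguments cycle_adj n : clear implicits.

(* Main.v *)
Require Import Defs.
From mathcomp Require Import all_boot all_order.
From mathcomp Require Import zify.

Fixpoint S (g : nat -> nat) (s m : nat) : nat :=
  match m with 0 => 0 | m'.+1 => g s + S g s.+1 m' end.

Lemma S_big g s m : \sum_(j < m) g (s + j) = S g s m.
Proof.
elim: m s => [|m IH] s; first by rewrite big_ord0.
rewrite big_ord_recl /= addn0 -IH; congr (_ + _).
by apply: eq_bigr => j _; rewrite /bump /= add1n addSnnS.
Qed.

Lemma S_add g s a b : S g s (a + b) = S g s a + S g (s + a) b.
Proof.
elim: a s => [|a IH] s /=; first by rewrite addn0.
by rewrite IH addnA addSnnS.
Qed.

Lemma S_ext g g' s m : (forall i, s <= i < s + m -> g i = g' i) -> S g s m = S g' s m.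
Proof.
elim: m s => [|m IH] s H //=.
rewrite H ?leqnn ?addnS ?ltnS ?leq_addr //; congr (_ + _); apply: IH => i /andP [h1 h2].
apply: H; rewrite (ltnW h1) /=; by rewrite -addSnnS.
Qed.

Lemma S_rot g n s : (forall i, g (i + n) = g i) -> S g s n = S g 0 n.
Proof.
move=> per; elim: s => [|s IH] //; rewrite -IH.
case: n per {IH} => [|m] per //.
rewrite -(addn1 m) S_add /= addn0 addSnnS addn1 per.
by rewrite addnC.
Qed.

Lemma S_win g s k : (forall i, 2 <= g i + g i.+1 + g i.+2) -> 2 * k <= S g s (3 * k).
Proof.
move=> W; elim: k s => [|k IH] s //.
rewrite !mulnS S_add /= addn0.
have := W s; have := IH (s + 3); lia.
Qed.

Lemma S_const1 g s m : (forall i, g i = 1) -> S g s m = m.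
Proof. move=> H; elim: m s => [|m IH] s //=; by rewrite H IH. Qed.

Lemma S_ge_first g s m : 0 < m -> g s <= S g s m.
Proof. by case: m => //= m _; rewrite leq_addr. Qed.

Lemma cyc_key n (npos : 0 < n) i (u : 'I_n) :
  cycle_adj n (Ordinal (ltn_pmod i.+1 npos)) u = (val u == i.+2 %% n) || (val u == i %% n).
Proof.
rewrite /cycle_adj /=.
have -> : (i.+1 %% n).+1 %% n = i.+2 %% n by rewrite -addn1 modnDml addn1.
rewrite [i.+2 %% n == u]eq_sym; congr (_ || _).
rewrite -(addn1 u) -(addn1 i) eqn_modDr modn_small //.
Qed.

Lemma nbr_cyc n (npos : 0 < n) (n3 : 2 < n) F i :
  nbr_sum (cycle_adj n) F (Ordinal (ltn_pmod i.+1 npos)) =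
  F (Ordinal (ltn_pmod i.+2 npos)) + F (Ordinal (ltn_pmod i npos)).
Proof.
have ab : (i.+2 %% n == i %% n) = false.
  rewrite -(addn2 i) -{2}(addn0 i) eqn_modDl mod0n modn_small //; lia.
rewrite /nbr_sum (bigD1 (Ordinal (ltn_pmod i.+2 npos))) /=; last by rewrite cyc_key eqxx.
congr (_ + _); apply: big_pred1 => u /=.
rewrite cyc_key -!val_eqE /=.
have [->|_] := eqVneq (val u) (i.+2 %% n); first by rewrite /= ab.
by rewrite orFb andbT.
Qed.

Lemma path_sub_cyc n (i j : 'I_n) : path_adj n i j -> cycle_adj n i j.
Proof.
rewrite /path_adj /cycle_adj => /orP [/eqP h|/eqP h]; apply/orP.
  by left; rewrite modn_small h.
by right; rewrite modn_small h.
Qed.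

Lemma nbr_mono (T : finType) (a1 a2 : rel T) F v :
  (forall x y, a1 x y -> a2 x y) -> nbr_sum a1 F v <= nbr_sum a2 F v.
Proof.
move=> H; rewrite /nbr_sum [X in X <= _]big_mkcond [X in _ <= X]big_mkcond /=.
apply: leq_sum => u _; case h1: (a1 v u); first by rewrite (H _ _ h1).
by case: (a2 v u).
Qed.

Lemma lower n (n3 : 2 < n) (f : {ffun 'I_n -> 'I_3}) :
  is_220_df (cycle_adj n) f -> 2 * ((n + 2) %/ 3) <= weight f.
Proof.
move=> df; have npos : 0 < n by lia.
pose g := fun i => nat_of_ord (f (Ordinal (ltn_pmod i npos))).
have gm : forall i j, i %% n = j %% n -> g i = g j.
  by move=> i j e; rewrite /g; congr (nat_of_ord (f _)); apply: val_inj.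
have per : forall i, g (i + n) = g i by move=> i; apply: gm; rewrite modnDr.
have g2 : forall i, g i <= 2.
  by move=> i; rewrite /g; have := ltn_ord (f (Ordinal (ltn_pmod i npos))); lia.
have loc : forall i, g i.+1 = 2 \/ 2 <= g i + g i.+2.
  move=> i; move/forallP: df => /(_ (Ordinal (ltn_pmod i.+1 npos))).
  rewrite nbr_cyc // => /implyP H.
  have := g2 i.+1; case: (leqP (g i.+1) 1) => h1 h2.
    by right; have := H h1; rewrite /g addnC.
  by left; apply/eqP; rewrite eqn_leq h2 h1.
have W : forall i, 2 <= g i + g i.+1 + g i.+2 by move=> i; case: (loc i); lia.
have wS : forall s, weight f = S g s n.
  move=> s; rewrite S_rot // -S_big /weight; apply: eq_bigr => v _.
  rewrite add0n /g; congr (nat_of_ord (f _)); apply: val_inj => /=.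
  by rewrite modn_small.
have [k [r [e rlt]]] : exists k r, n = 3 * k + r /\ r < 3.
  by exists (n %/ 3), (n %% 3); split; [rewrite mulnC -divn_eq | rewrite ltn_mod].
have key : forall s, S g s n = S g s (3 * k) + S g (s + 3 * k) r.
  by move=> s; rewrite {1}e S_add.
case: (posnP r) => r0.
  rewrite (wS 0) key; have := S_win g 0 k W; lia.
case ex: [exists v : 'I_n, g v == 2].
  move/existsP: ex => [v /eqP gv].
  rewrite (wS (v + r)) key.
  have := S_win g (v + r) k W.
  have := @S_ge_first g (v + r + 3 * k) r r0.
  have -> : v + r + 3 * k = v + n by lia.
  rewrite per gv; lia.
have all1 : forall i, g i <= 1.
  move=> i; move/existsPn: ex => /(_ (Ordinal (ltn_pmod i npos))) /=.
  rewrite (gm (i %% n) i) ?modn_mod //; have := g2 i; lia.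
have one : forall i, g i = 1.
  by move=> i; case: (loc i); have := all1 i; have := all1 i.+1; have := all1 i.+2; lia.
rewrite (wS 0) S_const1 //; lia.
Qed.

Lemma nbr_ge (T : finType) (adj : rel T) F v u : adj v u -> F u <= nbr_sum adj F v.
Proof. by move=> h; rewrite /nbr_sum (bigD1 u) /= ?h // leq_addr. Qed.

Definition c0 n (i : nat) : bool := (i %% 3 == 1) || ((i.+1 == n) && (i %% 3 == 0)).
Definition f0 n : {ffun 'I_n -> 'I_3} :=
  [ffun i : 'I_n => if c0 n i then (ord_max : 'I_3) else ord0].

Lemma f0E n (i : 'I_n) : nat_of_ord (f0 n i) = if c0 n i then 2 else 0.
Proof. by rewrite ffunE; case: (c0 n i). Qed.

Lemma Sh' m : S (fun i => if i %% 3 == 1 then 2 else 0) 0 m = 2 * ((m + 1) %/ 3).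
Proof.
elim: m => [|m IH] //.
rewrite -[m.+1]addn1 S_add IH /= add0n addn0; case: ifP => /eqP h; lia.
Qed.

Lemma f0_weight n : weight (f0 n) = 2 * ((n + 2) %/ 3).
Proof.
have -> : weight (f0 n) = S (fun i => if c0 n i then 2 else 0) 0 n.
  by rewrite -S_big; apply: eq_bigr => i _; rewrite f0E add0n.
case: n => [|m] //.
rewrite -[m.+1]addn1 S_add /= add0n addn0.
rewrite (@S_ext _ (fun i => if i %% 3 == 1 then 2 else 0)); last first.
  move=> i /andP [_ h]; rewrite /c0; congr (if _ then _ else _).
  have -> : (i.+1 == m + 1) = false by apply/negbTE; lia.
  by rewrite orbF.
rewrite Sh' /c0 addn1 eqxx /=; case: ifP => /orP h.
  case: h => /eqP h; lia.
have h1 : m %% 3 != 1 by apply/negP => hh; apply: h; left.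
have h2 : m %% 3 != 0 by apply/negP => hh; apply: h; right.
lia.
Qed.

Lemma f0_df n : is_220_df (path_adj n) (f0 n).
Proof.
apply/forallP => v; apply/implyP; rewrite f0E; case: ifP => // hc _.
move: hc; rewrite /c0 => /norP [h1 h2].
have vn := ltn_ord v.
case m0: (v %% 3 == 0).
  have h : v.+1 < n by move: h2; rewrite m0 andbT => h2; lia.
  apply: leq_trans (@nbr_ge _ (path_adj n) (fun u => nat_of_ord (f0 n u)) v (Ordinal h) _).
    rewrite /= f0E /c0; move/eqP: m0 => m0.
    by have -> : v.+1 %% 3 == 1 by apply/eqP; lia.
  by rewrite /path_adj /= eqxx.
have vpos : 0 < v by move: m0; case: (nat_of_ord v).
have h : v.-1 < n by lia.
apply: leq_trans (@nbr_ge _ (path_adj n) (fun u => nat_of_ord (f0 n u)) v (Ordinal h) _).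
  rewrite /= f0E /c0.
  have : v %% 3 = 2 by move/eqP: m0 => m0; move/eqP: h1 => h1; lia.
  move=> e; have -> : v.-1 %% 3 == 1 by apply/eqP; lia.
  by [].
by rewrite /path_adj /= prednK // eqxx orbT.
Qed.

Lemma path_cyc_df n (f : {ffun 'I_n -> 'I_3}) :
  is_220_df (path_adj n) f -> is_220_df (cycle_adj n) f.
Proof.
move=> /forallP H; apply/forallP => v; apply/implyP => h.
move/implyP: (H v) => /(_ h) h2; apply: leq_trans h2 _.
apply: nbr_mono; exact: path_sub_cyc.
Qed.

Lemma wconst n : weight [ffun _ : 'I_n => (ord_max : 'I_3)] = 2 * n.
Proof.
rewrite /weight (eq_bigr (fun _ => 2)); last by move=> i _; rewrite ffunE.
by rewrite sum_nat_const card_ord mulnC.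
Qed.

Lemma min_le (I : finType) (P : pred I) (F : I -> nat) x0 j :
  P j -> \big[minn/x0]_(i | P i) F i <= F j.
Proof.
move=> Pj; rewrite -big_filter.
have : j \in [seq i <- index_enum I | P i] by rewrite mem_filter Pj mem_index_enum.
elim: [seq i <- index_enum I | P i] => [|a s IH] //.
rewrite in_cons big_cons => /orP [/eqP ->|h]; first exact: geq_minl.
by apply: leq_trans (geq_minr _ _) (IH h).
Qed.

Lemma gamma_eq n (adj : rel 'I_n) : 2 < n ->
  is_220_df adj (f0 n) ->
  (forall f, is_220_df adj f -> is_220_df (cycle_adj n) f) ->
  gamma220 adj = 2 * ((n + 2) %/ 3).
Proof.
move=> n3 d0 dc; apply/eqP; rewrite eqn_leq; apply/andP; split.
  rewrite /gamma220 -f0_weight; exact: min_le.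
rewrite /gamma220; apply: (big_ind (fun x => 2 * ((n + 2) %/ 3) <= x)).
- rewrite wconst; lia.
- by move=> x y hx hy; rewrite leq_min hx hy.
- by move=> f hf; apply: lower => //; apply: dc.
Qed.

Theorem proposition35 (n : nat) :
  3 <= n ->
  gamma220 (path_adj n) = 2 * ((n + 2) %/ 3) /\
  gamma220 (cycle_adj n) = 2 * ((n + 2) %/ 3).
Proof.
move=> n3; split; apply: gamma_eq => //.
- exact: f0_df.
- exact: path_cyc_df.
- apply: path_cyc_df; exact: f0_df.
Qed.
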